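(* If $G$ is a triangle-free graph of order $n$, then $q_n(G)<2n/9$, where $q_n(G)$ is the smallest eigenvalue of the signless Laplacian of $G$.
   Context: Graphs are finite and simple. For a graph $G$ with adjacency matrix $A$ and diagonal degree matrix $D$, the signless Laplacian is $Q(G)=D+A$; $q_n(G)$ is its smallest eigenvalue. *)

(* Defs.v *)
From HB Require Import structures.
From mathcomp Require Import all_boot all_order all_algebra.
From mathcomp Require Import all_reals.
Set Implicit Arguments. Unset Strict Implicit. Unset Printing Implicit Defensive.
Import Order.TTheory GRing.Theory Num.Theory.
Local Open Scope ring_scope.

Definition simple_graph (n : nat) (e : rel 'I_n) : Prop :=
  (forall x y, e x y = e y x) /\ (forall x, ~~ e x x).

Definition triangle_free (n : nat) (e : rel 'I_n) : Prop :=
  ~ exists x y z, [&& e x y, e y z & e z x].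

Definition deg (n : nat) (e : rel 'I_n) (i : 'I_n) : nat := #|[set j | e i j]|.

Definition adjacency_mx (R : nzRingType) (n : nat) (e : rel 'I_n) : 'M[R]_n :=
  \matrix_(i, j) (e i j)%:R.

Definition degree_mx (R : nzRingType) (n : nat) (e : rel 'I_n) : 'M[R]_n :=
  diag_mx (\row_i (deg e i)%:R).

Definition signless_laplacian (R : nzRingType) (n : nat) (e : rel 'I_n) : 'M[R]_n :=
  degree_mx R e + adjacency_mx R e.

Definition smallest_eigenvalue (R : realFieldType) (n : nat) (M : 'M[R]_n) (a : R) : Prop :=
  eigenvalue M a /\ forall b, eigenvalue M b -> a <= b.

(* Main.v *)
Require Import Defs.
From HB Require Import structures.
From mathcomp Require Import all_boot all_order all_algebra.
From mathcomp Require Import all_reals.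
From mathcomp Require Import complex.
From mathcomp Require Import ring lra.
Import Order.TTheory GRing.Theory Num.Theory.
Local Open Scope ring_scope.
Local Open Scope sesquilinear_scope.

Section Ray.
Variable R : rcfType.
Local Notation C := (R[i]).
Local Notation f := (real_complex R).

Lemma f_real (r : R) : f r \is Num.real.
Proof. by rewrite complex_real. Qed.

Lemma rayleigh n (A : 'M[R]_n) (x : 'rV[R]_n) (q : R) :
  A^T = A -> (forall b, eigenvalue A b -> q <= b) ->
  q * (x *m x^T) 0 0 <= (x *m A *m x^T) 0 0.
Proof.
move=> Asym qmin.
pose Ac := map_mx f A.
have Aherm : Ac \is hermsymmx.
  apply: realsym_hermsym.
    apply/is_hermitianmxP; rewrite expr0 scale1r.
    apply/matrixP => i j; rewrite !mxE /=.
    have := congr1 (fun M : 'M[R]_n => M j i) Asym; rewrite !mxE => ->.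
    by [].
  by apply/mxOverP => i j; rewrite mxE f_real.
have /hermitian_normalmx /orthomx_spectralP Aeq := Aherm.
set P := spectralmx Ac in Aeq; set d := spectral_diag Ac in Aeq.
have Pu : P \is unitarymx by apply: spectral_unitarymx.
have iP : invmx P = P^t* by apply: invmx_unitary.
have Punit : P \in unitmx by apply: spectral_unit.
have dreal := hermitian_spectral_diag_real Aherm.
have dq : forall k, f q <= d 0 k.
  move=> k.
  have dk : d 0 k \is Num.real by apply: (mxOverP dreal).
  have [r dr] := complex_realP _ dk.
  rewrite dr lecR; apply: qmin.
  rewrite eigenvalue_root_char -(fmorph_root f) map_char_poly.
  suff h : root (char_poly Ac) (d 0 k).
    by rewrite dr in h; exact h.
  rewrite -eigenvalue_root_char.
  apply/eigenvalueP; exists (row k P).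
    have : P *m Ac = diag_mx d *m P by rewrite Aeq !mulmxA mulmxV ?mul1mx.
    move=> /(congr1 (row k)); rewrite !row_mul => ->.
    by rewrite row_diag_mx -scalemxAl [row k P]rowE.
  rewrite -row_free_unit in Punit; rewrite rowE mul_mx_rowfree_eq0 //.
  by apply/eqP => /matrixP/(_ 0 k); rewrite !mxE !eqxx /= => /eqP; rewrite oner_eq0.
pose xc := map_mx f x.
have xcT : xc^t* = xc^T.
  by apply/matrixP => i j; rewrite !mxE conj_Creal // f_real.
have xcT' : xc^T = map_mx f x^T by apply/matrixP => i j; rewrite !mxE.
have E1 : f ((x *m A *m x^T) 0 0) = (xc *m Ac *m xc^t*) 0 0.
  by rewrite xcT xcT' /xc /Ac -!map_mxM [RHS]mxE.
have E2 : f ((x *m x^T) 0 0) = (xc *m xc^t*) 0 0.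
  by rewrite xcT xcT' /xc /Ac -!map_mxM [RHS]mxE.
suff h : f (q * (x *m x^T) 0 0) <= f ((x *m A *m x^T) 0 0).
  by move: h; rewrite lecR.
rewrite rmorphM /= E1 E2.
pose y := xc *m P^t*.
have yT : y^t* = P *m xc^t*.
  by rewrite /y trmx_mul map_mxM trmxCK.
have PP : P^t* *m P = 1%:M.
  by rewrite -iP (mulVmx Punit).
have -> : xc *m xc^t* = y *m y^t*.
  by rewrite yT mulmxA /y -(mulmxA xc) PP mulmx1.
have -> : xc *m Ac *m xc^t* = y *m diag_mx d *m y^t*.
  by rewrite yT Aeq iP !mulmxA.
rewrite mul_mx_diag !mxE mulr_sumr; apply: ler_sum => k _.
have key : forall a : C, f q * (a * a^*) <= a * d 0 k * a^*.
  move=> a; have -> : a * d 0 k * a^* = d 0 k * (a * a^*) by rewrite [a * _]mulrC -mulrA.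
  by rewrite ler_wpM2r ?mul_conjC_ge0 // dq.
rewrite !mxE; exact: key.
Qed.
End Ray.

Section Graph.
Variable R : realFieldType.
Variable n : nat.
Variable e : rel 'I_n.
Hypothesis esym : forall x y, e x y = e y x.

Lemma degR i : (deg e i)%:R = \sum_j ((e i j)%:R : R).
Proof.
rewrite /deg cardsE -sum1_card natr_sum big_mkcond /=.
by apply: eq_bigr => j _; rewrite -[j \in e i]/(e i j); case: (e i j).
Qed.

Lemma quadQ (x : 'rV[R]_n) :
  (x *m signless_laplacian R e *m x^T) 0 0 =
  \sum_j \sum_i (e i j)%:R * (x 0 j ^+ 2 + x 0 i * x 0 j).
Proof.
rewrite /signless_laplacian /degree_mx mulmxDr mul_mx_diag mulmxDl !mxE -big_split /=.
apply: eq_bigr => j _.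
rewrite !mxE degR mulr_sumr mulr_suml mulr_suml -big_split /=.
apply: eq_bigr => i _; rewrite (esym j i) /adjacency_mx mxE; ring.
Qed.

Lemma quad_sym (x : 'rV[R]_n) :
  (1 *+ 2) * (\sum_j \sum_i (e i j)%:R * (x 0 j ^+ 2 + x 0 i * x 0 j)) =
  \sum_j \sum_i (e i j)%:R * (x 0 i + x 0 j) ^+ 2.
Proof.
rewrite mulr2n mulrDl mul1r [X in X + _]exchange_big /= -big_split /=.
apply: eq_bigr => j _; rewrite -big_split /=.
apply: eq_bigr => i _; rewrite (esym j i); ring.
Qed.
End Graph.

Theorem corollary3 (R : realType) (n : nat) (e : rel 'I_n) (q : R) :
  (0 < n)%N -> simple_graph e -> triangle_free e ->
  smallest_eigenvalue (signless_laplacian R e) q ->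
  q < 2 * n%:R / 9.
Proof.
move=> n0 [esym eirr] tf [qeig qmin].
pose i0 := Ordinal n0.
have [/= v _ hv] := @arg_maxnP _ i0 xpredT (deg e) isT.
pose x : 'rV[R]_n := \row_i (if e v i then 3 else -1).
have Qsym : (signless_laplacian R e)^T = signless_laplacian R e.
  rewrite /signless_laplacian linearD /= /degree_mx tr_diag_mx; congr (_ + _).
  by apply/matrixP => i j; rewrite !mxE esym.
have hR := @rayleigh _ _ _ x q Qsym qmin.
rewrite quadQ // in hR.
pose N : R := n%:R.
pose D : R := (deg e v)%:R.
pose S : R := \sum_j (deg e j)%:R.
have hxx : (x *m x^T) 0 0 = N + 8 * D.
  rewrite mxE /D degR // mulr_sumr.
  have -> : N = \sum_(j < n) (1:R) by rewrite sumr_const card_ord.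
  rewrite -big_split /=; apply: eq_bigr => j _; rewrite !mxE.
  by case: (e v j) => /=; ring.
have hT : \sum_j \sum_i (e i j)%:R * (x 0 j ^+ 2 + x 0 i * x 0 j) = 2 * S.
  apply: (@mulfI _ 2); first by rewrite pnatr_eq0.
  rewrite quad_sym // /S !mulr_sumr; apply: eq_bigr => j _.
  rewrite degR // !mulr_sumr; apply: eq_bigr => i _; rewrite (esym j i) !mxE.
  case Eij: (e i j); last by rewrite /=; ring.
  case Evi: (e v i); case Evj: (e v j) => /=; try ring.
  by exfalso; apply: tf; exists v, i, j; rewrite Evi Eij esym Evj.
have H2 : S <= N * D.
  have -> : N * D = \sum_(j < n) D by rewrite sumr_const card_ord mulr_natl.
  by apply: ler_sum => j _; rewrite ler_nat (hv j isT).
have degn : forall j, (deg e j < n)%N.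
  move=> j; rewrite /deg.
  have sub : [set i | e j i] \subset [set~ j].
    apply/subsetP => i; rewrite !inE; apply: contraTneq => ->; exact: eirr.
  apply: (leq_ltn_trans (subset_leq_card sub)).
  by rewrite cardsC1 card_ord ltn_predL.
have H3 : S + N <= N * N.
  have -> : N * N = \sum_(j < n) N by rewrite sumr_const card_ord mulr_natl.
  have -> : S + N = \sum_(j < n) ((deg e j)%:R + 1) by rewrite big_split /= sumr_const card_ord.
  apply: ler_sum => j _.
  by rewrite natr1 ler_nat degn.
have H4 : 1 <= N by rewrite /N ler1n.
have H5 : 0 <= D by rewrite /D ler0n.
rewrite hxx hT in hR.
have h : 0 < (2 * N - 9 * q) * (N + 8 * D) by nra.
have h2 : 0 < 2 * N - 9 * q.
  by move: h; rewrite pmulr_lgt0 //; lra.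
rewrite ltr_pdivlMr; last by lra.
lra.
Qed.
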